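(* Let $G/\Gamma$ be a nilmanifold with filtration $(G_i)$, let $g\in\mathrm{poly}(\mathbb Z^\ell,G)$ with $g(0)=\mathrm{id}_G$, and let $\vec h\in\mathbb Z^\ell$. Define \[g_{\vec h}(\vec n)=\big(\{g_{\mathrm{lin}}(\vec h)\}^{-1}g_2(\vec n+\vec h)g_{\mathrm{lin}}(\vec n+\vec h)[g_{\mathrm{lin}}(\vec h)]^{-1},\ g(\vec n)\big).\] Then $g_{\vec h}\in\mathrm{poly}(\mathbb Z^\ell,G^\square)$, where $G^\square$ carries the filtration $(G^\square)_0=(G^\square)_1=G^\square$ and $(G^\square)_i=G_i\times_{G_{i+1}}G_i$ for $i\ge1$.
   Context: $g_{\mathrm{lin}}(\vec n)=g(e_1)^{n_1}\cdots g(e_\ell)^{n_\ell}$ and $g_2(\vec n)=g(\vec n)g_{\mathrm{lin}}(\vec n)^{-1}$. For a normal subgroup $H$ of $G$, $G\times_HG=\{(g,g')\in G^2:g'g^{-1}\in H\}$, and $G^\square=G\times_{G_2}G$. Every $x\in G$ factors uniquely as $x=\{x\}[x]$ with $[x]\in\Gamma$ and $\psi(\{x\})\in[-1/2,1/2)^d$, where $\psi$ denotes Mal'cev coordinates of the second kind ($x=\exp(t_1X_1)\cdots\exp(t_dX_d)$, $\psi(x)=(t_i)$). A filtration satisfies $G=G_0=G_1\supseteq G_2\supseteq\cdots$, $[G_i,G_j]\subseteq G_{i+j}$, $G_i$ trivial for large $i$; $\mathrm{poly}(\mathbb Z^\ell,H)$ for a filtered group $H$ consists of maps $\vec n\mapsto\prod_{\vec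 i}h_{\vec i}^{\binom{\vec n}{\vec i}}$ with $h_{\vec i}\in H_{|\vec i|}$. *)

(* Defs.v *)
From HB Require Import structures.
From mathcomp Require Import all_boot all_order.
From mathcomp Require Import ssralg ssrnum ssrint intdiv matrix.
From mathcomp Require Import monoid.

Set Implicit Arguments.
Unset Strict Implicit.
Unset Printing Implicit Defensive.

Definition zexpg (G : groupType) (x : G) (z : int) : G :=
  match z with
  | Posz n => (x ^+ n)%g
  | Negz n => (x ^- n.+1)%g
  end.

Definition binz (z : int) (k : nat) : int :=
  ((\prod_(j < k) (z - (j : nat)%:Z))%R %/ (k`!)%:Z)%Z.

Definition is_subgroup (G : groupType) (S : G -> Prop) : Prop :=
  S 1%g /\ (forall x y, S x -> S y -> S (x * y)%g) /\ (forall x, S x -> S (x^-1)%g).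

Definition is_filtration (G : groupType) (F : nat -> G -> Prop) : Prop :=
  (forall i, is_subgroup (F i)) /\
  (forall x, F 0 x) /\ (forall x, F 1 x) /\
  (forall i x, F i.+1 x -> F i x) /\
  (forall i j x y, F i x -> F j y -> F (i + j) [~ x, y]%g) /\
  (exists s, forall i x, s <= i -> F i x -> x = 1%g).

(* Points of Z^l are row vectors 'rV[int]_l; multi-indices of total    *)
(* degree <= D are functions 'I_l -> 'I_D.+1.                          *)
Definition mdeg (l D : nat) (i : {ffun 'I_l -> 'I_D.+1}) : nat :=
  \sum_(j < l) (i j : nat).

Definition mbinom (l D : nat) (n : 'rV[int]_l) (i : {ffun 'I_l -> 'I_D.+1}) : int :=
  (\prod_(j < l) binz (n ord0 j) (i j))%R.

(* The fixed order in which the Taylor product is taken: multi-indices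
   of degree <= D, sorted by increasing degree (ties: enumeration order). *)
Definition midx (l D : nat) : seq {ffun 'I_l -> 'I_D.+1} :=
  sort (fun a b => mdeg a <= mdeg b) [seq i <- enum {ffun 'I_l -> 'I_D.+1} | mdeg i <= D].

Definition is_poly (H : groupType) (F : nat -> H -> Prop) (l : nat)
    (g : 'rV[int]_l -> H) : Prop :=
  exists (D : nat) (c : {ffun 'I_l -> 'I_D.+1} -> H),
    (forall i, mdeg i <= D -> F (mdeg i) (c i)) /\
    (forall n, g n = (\prod_(i <- midx l D) zexpg (c i) (mbinom n i))%g).

Definition prodG (G : groupType) : Type := (G * G)%type.
HB.instance Definition _ (G : groupType) := Choice.on (prodG G).

Section ProdG.
Variable G : groupType.
Definition pmul (x y : prodG G) : prodG G := ((x.1 * y.1)%g, (x.2 * y.2)%g).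
Definition pone : prodG G := (1%g, 1%g).
Definition pinv (x : prodG G) : prodG G := ((x.1)^-1%g, (x.2)^-1%g).
Lemma pmulA : associative pmul.
Proof. by move=> [a b] [c d] [e f]; rewrite /pmul /= !mulgA. Qed.
Lemma pmul1 : left_id pone pmul.
Proof. by move=> [a b]; rewrite /pmul /= !mul1g. Qed.
Lemma pmulr1 : right_id pone pmul.
Proof. by move=> [a b]; rewrite /pmul /= !mulg1. Qed.
Lemma pmulV : left_inverse pone pinv pmul.
Proof. by move=> [a b]; rewrite /pmul /= !mulVg. Qed.
Lemma pmulVr : right_inverse pone pinv pmul.
Proof. by move=> [a b]; rewrite /pmul /= !mulgV. Qed.
End ProdG.

HB.instance Definition _ (G : groupType) :=
  isGroup.Build (prodG G) (@pmulA G) (@pmul1 G) (@pmulr1 G) (@pmulV G) (@pmulVr G).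

Definition fibprod (G : groupType) (A H : G -> Prop) (p : prodG G) : Prop :=
  A p.1 /\ A p.2 /\ H (p.2 * (p.1)^-1)%g.

Definition sq_filt (G : groupType) (F : nat -> G -> Prop) (i : nat) : prodG G -> Prop :=
  if i <= 1 then fibprod (fun _ => True) (F 2)
  else fibprod (F i) (F i.+1).

Definition unitv (l : nat) (j : 'I_l) : 'rV[int]_l := delta_mx ord0 j.

Definition g_lin (G : groupType) (l : nat) (g : 'rV[int]_l -> G) (n : 'rV[int]_l) : G :=
  (\prod_(j < l) zexpg (g (unitv j)) (n ord0 j))%g.

Definition g_2 (G : groupType) (l : nat) (g : 'rV[int]_l -> G) (n : 'rV[int]_l) : G :=
  (g n * (g_lin g n)^-1)%g.

Definition g_shift (G : groupType) (frac intp : G -> G) (l : nat)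
    (g : 'rV[int]_l -> G) (h : 'rV[int]_l) (n : 'rV[int]_l) : prodG G :=
  (((frac (g_lin g h))^-1 * g_2 g (n + h)%R * g_lin g (n + h)%R
      * (intp (g_lin g h))^-1)%g,
   g n).

(* Main.v *)
Require Import Defs.
From HB Require Import structures.
From mathcomp Require Import all_boot all_order.
From mathcomp Require Import ssralg ssrnum ssrint intdiv matrix.
From mathcomp Require Import monoid.
From mathcomp Require Import zify ring.
Module ME.
Set Implicit Arguments. Unset Strict Implicit. Unset Printing Implicit Defensive.
Import GRing.Theory Num.Theory.

Section Bin.
Local Open Scope ring_scope.
Definition ff (z : int) (k : nat) : int := \prod_(j < k) (z - (j : nat)%:Z).

Lemma ffS z k : ff z k.+1 = ff z k * (z - k%:Z).
Proof. by rewrite /ff big_ord_recr. Qed.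

Lemma ffSl z k : ff (z + 1) k.+1 = (z + 1) * ff z k.
Proof.
rewrite /ff big_ord_recl /= subr0; congr (_ * _); apply: eq_bigr => i _.
rewrite /bump /= add1n -addn1 PoszD; ring.
Qed.

Lemma ff0 z : ff z 0 = 1. Proof. by rewrite /ff big_ord0. Qed.

Lemma ff_diff z k : ff (z + 1) k.+1 - ff z k.+1 = (k.+1)%:Z * ff z k.
Proof. rewrite ffSl ffS -addn1 PoszD. ring. Qed.

Lemma ff_dvd k z : exists q, ff z k = q * (k`!)%:Z.
Proof.
elim: k z => [|k IH] z; first by exists 1; rewrite ff0 mul1r.
pose Q (z : int) := exists q, ff z k.+1 = q * (k.+1`!)%:Z.
have step : forall z, Q z <-> Q (z + 1).
  move=> w; have [q Hq] := IH w; rewrite /Q.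
  have E := ff_diff w k; rewrite Hq in E.
  split=> [[p Hp]|[p Hp]].
    exists (p + q).
    by rewrite -(subrK (ff w k.+1) (ff (w+1) k.+1)) E Hp factS PoszM; ring.
  exists (p - q); move: E; rewrite Hp factS PoszM => E.
  have -> : ff w k.+1 = p * (k.+1%:Z * (k`!)%:Z) - k.+1%:Z * (q * (k`!)%:Z).
    by rewrite -E; ring.
  ring.
have Q0 : Q 0 by exists 0; rewrite /ff big_ord_recl /= subr0 mul0r mul0r.
elim/int_rect: z => [//|n IHn|n IHn].
  have -> : n.+1%:Z = n%:Z + 1 by rewrite -addn1 PoszD.
  exact: ((step n).1 IHn).
apply: ((step (- n.+1%:Z)).2).
have -> : - (n.+1%:Z) + 1 = - n%:Z by rewrite -addn1 PoszD; ring.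
exact: IHn.
Qed.

Lemma binz_ff z k : binz z k * (k`!)%:Z = ff z k.
Proof.
rewrite /binz -/(ff z k); apply: divzK; apply/dvdzP; exact: ff_dvd.
Qed.

Lemma fact_neq0 k : (k`!)%:Z != 0.
Proof. by rewrite eqz_nat -lt0n fact_gt0. Qed.

Lemma binz0 z : binz z 0 = 1.
Proof. by apply: (mulIf (fact_neq0 0)); rewrite binz_ff ff0 mul1r. Qed.

Lemma binz_pascal z k : binz (z + 1) k.+1 = binz z k.+1 + binz z k.
Proof.
apply: (mulIf (fact_neq0 k.+1)); rewrite mulrDl !binz_ff.
rewrite -(subrK (ff z k.+1) (ff (z + 1) k.+1)) ff_diff -binz_ff factS PoszM.
ring.
Qed.

Lemma ff_nat_big (a k : nat) : (a < k)%N -> ff a k = 0.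
Proof.
elim: k => // k IH; rewrite ltnS leq_eqVlt; case/orP => [/eqP ->|ak].
  by rewrite ffS subrr mulr0.
by rewrite ffS IH // mul0r.
Qed.

Lemma ff_nat_same (a : nat) : ff a a = (a`!)%:Z.
Proof.
elim: a => [|a IH]; first by rewrite ff0.
have -> : a.+1%:Z = a%:Z + 1 by rewrite -addn1 PoszD.
by rewrite ffSl IH factS PoszM -addn1 PoszD.
Qed.

Lemma binz_big (a k : nat) : (a < k)%N -> binz a k = 0.
Proof. by move=> ak; apply: (mulIf (fact_neq0 k)); rewrite binz_ff ff_nat_big // mul0r. Qed.

Lemma binz_same (a : nat) : binz a a = 1.
Proof. by apply: (mulIf (fact_neq0 a)); rewrite binz_ff ff_nat_same mul1r. Qed.
End Bin.

End ME.
Import ME.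

Module MF.
Set Implicit Arguments. Unset Strict Implicit. Unset Printing Implicit Defensive.
Import GRing.Theory Num.Theory.

Section Zexp.
Variable G : groupType.
Implicit Types (x : G) (a b z : int).
Local Open Scope group_scope.

Lemma zexpg_nat x (n : nat) : zexpg x n = x ^+ n. Proof. by []. Qed.
Lemma zexpg_oppn x (n : nat) : zexpg x (- n%:Z)%R = x ^- n.
Proof. by case: n => [|n] //=; rewrite invg1. Qed.
Lemma zexpg0 x : zexpg x 0 = 1. Proof. by []. Qed.

Lemma zexpgS x z : zexpg x (z + 1)%R = zexpg x z * x.
Proof.
case: z => n.
  by rewrite -PoszD addn1 /= expgSr.
have -> : (Negz n + 1 = - n%:Z)%R by rewrite NegzE; ring.
by rewrite zexpg_oppn /= expgS invgM mulgVK.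
Qed.

Lemma zexpgSV x z : zexpg x (z - 1)%R = zexpg x z * x^-1.
Proof. by rewrite -{2}(subrK 1%R z) zexpgS mulgK. Qed.

Lemma zexpgD x a b : zexpg x (a + b)%R = zexpg x a * zexpg x b.
Proof.
elim/int_rect: b => [|n IH|n IH]; first by rewrite addr0 mulg1.
  have E : (n.+1%:Z = n%:Z + 1)%R by rewrite -addn1 PoszD.
  by rewrite E addrA !zexpgS IH mulgA.
have E : (- n.+1%:Z = - n%:Z - 1)%R by rewrite -addn1 PoszD; ring.
by rewrite E addrA !zexpgSV IH mulgA.
Qed.

Lemma zexpgN x z : zexpg x (- z)%R = (zexpg x z)^-1.
Proof.
apply/esym/mulg1_eq; by rewrite -zexpgD subrr.
Qed.

Lemma zexpgB x a b : (zexpg x a)^-1 * zexpg x b = zexpg x (b - a)%R.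
Proof. by rewrite addrC zexpgD zexpgN. Qed.

Lemma zexpg_sub (S : G -> Prop) x z : is_subgroup S -> S x -> S (zexpg x z).
Proof.
move=> [S1 [SM SV]] Sx.
have Hn : forall n, S (x ^+ n) by elim=> // n IH; rewrite expgS; apply: SM.
case: z => n /=; first exact: Hn.
by apply: SV; apply: Hn.
Qed.
End Zexp.

Section MB.
Local Open Scope ring_scope.
Variable l : nat.
Definition evv (t : 'I_l) : 'rV[int]_l := unitv t.
Definition mb (n : 'rV[int]_l) (i : 'I_l -> nat) : int := \prod_(j < l) binz (n ord0 j) (i j).
Definition dec (t : 'I_l) (i : 'I_l -> nat) : 'I_l -> nat := fun j => if j == t then (i j).-1 else i j.

Lemma addev n t j : (n + evv t) ord0 j = n ord0 j + (j == t)%:R.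
Proof. by rewrite !mxE. Qed.

Lemma mb_step n t i : mb (n + evv t) i - mb n i =
  if (0 < i t)%N then mb n (dec t i) else 0.
Proof.
rewrite /mb (bigD1 t) //= [X in _ - X](bigD1 t) //=.
have -> : \prod_(j < l | j != t) binz ((n + evv t) ord0 j) (i j) =
          \prod_(j < l | j != t) binz (n ord0 j) (i j).
  by apply: eq_bigr => j /negbTE jt; rewrite addev jt addr0.
rewrite addev (_ : (t == t) = true); last by apply/eqP.
rewrite -mulrBl.
case E: (i t) => [|k] /=; first by rewrite !binz0 subrr mul0r.
rewrite binz_pascal addrAC subrr add0r [RHS](bigD1 t) //= /dec /=.
rewrite (_ : (t == t) = true) ?E /=; last by apply/eqP.
congr (_ * _); apply: eq_bigr => j /negbTE jt; by rewrite jt.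
Qed.
End MB.

Section Walk.
Local Open Scope ring_scope.
Variable l : nat.
Lemma walk (Q : 'rV[int]_l -> Prop) : Q 0 ->
  (forall h t, Q h -> Q (h + evv t)) -> (forall h t, Q h -> Q (h - evv t)) ->
  forall h, Q h.
Proof.
move=> Q0 Qp Qm.
have Hz : forall t (z : int) h, Q h -> Q (h + z *: evv t).
  move=> t z; elim/int_rect: z => [|n IH|n IH] h Qh; first by rewrite scale0r addr0.
    have -> : h + n.+1%:Z *: evv t = (h + n%:Z *: evv t) + evv t.
      have E : n.+1%:Z = n%:Z + 1 by rewrite -addn1 PoszD.
      by rewrite E scalerDl scale1r addrA.
    by apply: Qp; apply: IH.
  have -> : h + (- n.+1%:Z) *: evv t = (h + (- n%:Z) *: evv t) - evv t.
    have E : n.+1%:Z = n%:Z + 1 by rewrite -addn1 PoszD.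
    by rewrite E opprD scalerDl scaleN1r addrA.
  by apply: Qm; apply: IH.
have Hs : forall (r : seq 'I_l) (f : 'I_l -> int) h, Q h ->
    Q (h + \sum_(t <- r) f t *: evv t).
  elim=> [|t r IH] f h Qh; first by rewrite big_nil addr0.
  rewrite big_cons addrCA addrC; apply: Hz; exact: IH.
move=> h; rewrite (row_sum_delta h) -[X in Q X]add0r; exact: Hs.
Qed.
End Walk.

End MF.
Import MF.

Module MC.
Set Implicit Arguments. Unset Strict Implicit. Unset Printing Implicit Defensive.
Local Open Scope group_scope.

Ltac gsimp := rewrite /commg /conjg;
  repeat rewrite ?invgM ?invgK ?mulgA ?mulgK ?mulgVK ?mulg1 ?mul1g ?invg1 ?mulgV ?mulVg.

Section GB.
Variable G : groupType.
Implicit Types x y z u v a b : G.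
Lemma dmul_id u u' v v' : (u * v)^-1 * (u' * v') =
  (u^-1 * u') * [~ u^-1 * u', v] * (v^-1 * v').
Proof. by gsimp. Qed.
Lemma dcomm_id u u' v v' :
  let a := u^-1 * u' in let b := v^-1 * v' in let c := [~ u, v] in
  let X := [~ u, b] ^ a in
  [~ u, v]^-1 * [~ u', v'] =
  X * [~ X, c] * ([~ c, a] * [~ c, b] ^ a) * [~ a, b] * [~ a, v] ^ b.
Proof. move=> a b c X; rewrite /X /c /a /b. by gsimp. Qed.
Lemma conjC x y : x ^ y = x * [~ x, y].
Proof. by gsimp. Qed.
End GB.

Section Generic.
Variable H : groupType.
Variable F : nat -> H -> Prop.
Hypothesis Fsub : forall i, is_subgroup (F i).
Hypothesis Fnest : forall i x, F i.+1 x -> F i x.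
Hypothesis Fcomm : forall i j x y, F i x -> F j y -> F (i + j) [~ x, y].
Variable s : nat.
Hypothesis Ftriv : forall i x, s <= i -> F i x -> x = 1.

Lemma F1 i : F i 1. Proof. by case: (Fsub i). Qed.
Lemma FM i x y : F i x -> F i y -> F i (x * y). Proof. by case: (Fsub i) => _ [M _]; apply: M. Qed.
Lemma FV i x : F i x -> F i x^-1. Proof. by case: (Fsub i) => _ [_ V]; apply: V. Qed.
Lemma Fle i j x : i <= j -> F j x -> F i x.
Proof.
elim: j => [|j IH] ij Hx; first by rewrite leqn0 in ij; rewrite (eqP ij).
rewrite leq_eqVlt in ij; case/orP: ij => [/eqP->//|]; rewrite ltnS => ij.
by apply: IH => //; apply: Fnest.
Qed.
Lemma FJ i x y : F i x -> F 0 y -> F i (x ^ y).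
Proof. by move=> Hx Hy; rewrite conjC; apply: FM => //; rewrite -[i]addn0; apply: Fcomm. Qed.

Variable l : nat.
Definition seqT := 'rV[int]_l -> H.
Definition d (t : 'I_l) (u : seqT) : seqT := fun n => (u n)^-1 * u (n + evv t)%R.
Definition dK (K : seq 'I_l) (u : seqT) : seqT := foldl (fun u t => d t u) u K.
Definition P i (u : seqT) := forall K n, F (i + size K) (dK K u n).

Lemma dK_cons t K u : dK (t :: K) u = dK K (d t u). Proof. by []. Qed.
Lemma dK_cat K K' u : dK (K ++ K') u = dK K' (dK K u).
Proof. by rewrite /dK foldl_cat. Qed.

Lemma dK_ext K u v : (forall n, u n = v n) -> forall n, dK K u n = dK K v n.
Proof.
elim: K u v => //= t K IH u v E; apply: IH => n; by rewrite /d !E.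
Qed.

Lemma Pchar i u : P i u <-> (forall n, F i (u n)) /\ forall t, P i.+1 (d t u).
Proof.
split.
  move=> Pu; split; first by move=> n; have := Pu [::] n; rewrite addn0.
  by move=> t K n; have := Pu (t :: K) n; rewrite /= addnS addSn.
move=> [Hv Hd] [|t K] n /=; first by rewrite addn0.
by have := Hd t K n; rewrite addnS addSn.
Qed.

Lemma Pval i u n : P i u -> F i (u n). Proof. by case/Pchar => V _; apply: V. Qed.
Lemma Pd i u t : P i u -> P i.+1 (d t u). Proof. by case/Pchar => _ D; apply: D. Qed.

Lemma Pnest i u : P i.+1 u -> P i u.
Proof. by move=> Pu K n; apply: Fnest; rewrite -addSn; apply: Pu. Qed.
Lemma Ple i j u : i <= j -> P j u -> P i u.
Proof. by move=> ij Pu K n; apply: (@Fle _ (j + size K)); rewrite ?leq_add2r. Qed.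

Lemma Pext i u v : (forall n, u n = v n) -> P i u -> P i v.
Proof. by move=> E Pu K n; rewrite -(dK_ext K E). Qed.

Lemma dK1 K n : dK K (fun _ => 1) n = 1.
Proof.
elim: K => //= t K IH; rewrite -{2}IH; apply: dK_ext => m.
by rewrite /d mulg1 invg1.
Qed.

Lemma P1 i : P i (fun _ => 1).
Proof. by move=> K n; rewrite dK1; exact: F1. Qed.

Lemma Pbig i u : s <= i -> (forall n, F i (u n)) -> P i u.
Proof.
move=> si Fu; apply: (@Pext _ (fun _ => 1)); last exact: P1.
by move=> n; rewrite (Ftriv si (Fu n)).
Qed.

Lemma Ptriv i u : s <= i -> P i u -> forall n, u n = 1.
Proof. by move=> si Pu n; apply: (Ftriv si); apply: Pval. Qed.

Definition mulf (u v : seqT) : seqT := fun n => u n * v n.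
Definition comf (u v : seqT) : seqT := fun n => [~ u n, v n].
Definition conjf (u v : seqT) : seqT := fun n => u n ^ v n.

Lemma d_mulf t u v n :
  d t (mulf u v) n = mulf (mulf (d t u) (comf (d t u) v)) (d t v) n.
Proof. by rewrite /d /mulf /comf dmul_id. Qed.

Lemma d_comf t u v n : d t (comf u v) n =
  let a := d t u in let b := d t v in let c := comf u v in
  let X := conjf (comf u b) a in
  mulf (mulf (mulf (mulf X (comf X c)) (mulf (comf c a) (conjf (comf c b) a)))
     (comf a b)) (conjf (comf a v) b) n.
Proof. by rewrite /d /mulf /comf /conjf dcomm_id. Qed.

Definition Q N i (u : seqT) := forall K, size K <= N -> forall n, F (i + size K) (dK K u n).

Lemma Q0 i u : Q 0 i u <-> forall n, F i (u n).
Proof.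
split; first by move=> Qu n; have := Qu [::] isT n; rewrite addn0.
by move=> Fu [|//] _ n; rewrite addn0.
Qed.

Lemma QS N i u : Q N.+1 i u <-> (forall n, F i (u n)) /\ forall t, Q N i.+1 (d t u).
Proof.
split.
  move=> Qu; split; first by move=> n; have := Qu [::] isT n; rewrite addn0.
  by move=> t K sK n; have := Qu (t :: K) sK n; rewrite /= addnS addSn.
move=> [Hv Hd] [|t K] sK n /=; first by rewrite addn0.
by have := Hd t K sK n; rewrite addnS addSn.
Qed.

Lemma Qval N i u n : Q N i u -> F i (u n).
Proof. by move=> Qu; have := Qu [::] isT n; rewrite addn0. Qed.

Lemma Qnest N i u : Q N i.+1 u -> Q N i u.
Proof. by move=> Qu K sK n; apply: Fnest; rewrite -addSn; apply: Qu. Qed.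
Lemma Qle N i j u : i <= j -> Q N j u -> Q N i u.
Proof. by move=> ij Qu K sK n; apply: (@Fle _ (j + size K)); rewrite ?leq_add2r //; apply: Qu. Qed.
Lemma QNle N M i u : N <= M -> Q M i u -> Q N i u.
Proof. by move=> NM Qu K sK n; apply: Qu; apply: leq_trans NM. Qed.
Lemma Qext N i u v : (forall n, u n = v n) -> Q N i u -> Q N i v.
Proof. by move=> E Qu K sK n; rewrite -(dK_ext K E); apply: Qu. Qed.
Lemma QP i u : P i u <-> forall N, Q N i u.
Proof. by split=> [Pu N K _ n|Qu K n]; [apply: Pu|apply: (Qu (size K))]. Qed.

Definition Cl N :=
  (forall k u v, Q N k u -> Q N k v -> Q N k (mulf u v)) /\
  (forall a b u v, Q N a u -> Q N b v -> Q N (a + b) (comf u v)).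

Lemma Cl_conj N : Cl N -> forall k a u v, Q N k u -> Q N a v -> Q N k (conjf u v).
Proof.
move=> [SM SC] k a u v Qu Qv.
apply: (@Qext _ _ (mulf u (comf u v))); first by move=> n; rewrite /mulf /comf /conjf conjC.
apply: SM => //; apply: (@Qle _ _ (k + a)); first exact: leq_addr.
exact: SC.
Qed.

Lemma Cl_all N : Cl N.
Proof.
elim: N => [|N IH].
  split.
    by move=> k u v /Q0 Qu /Q0 Qv; apply/Q0 => n; apply: FM.
  by move=> a b u v /Q0 Qu /Q0 Qv; apply/Q0 => n; apply: Fcomm.
have IHc := Cl_conj IH.
case: IH => IHM IHC.
split.
  move=> k u v Qu' Qv'; have [Fu Du] := (QS _ _ _).1 Qu'; have [Fv Dv] := (QS _ _ _).1 Qv'.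
  apply/QS; split.
    by move=> n; apply: FM.
  move=> t; apply: (Qext (fun n => esym (d_mulf t u v n))).
  have Pa := Du t; have Pb := Dv t.
  have Qv : Q N k v by apply: QNle Qv'.
  apply: (IHM) => //; apply: (IHM) => //.
  apply: (@Qle _ _ (k.+1 + k)); first exact: leq_addr.
  exact: (IHC).
move=> a b u v Qu' Qv'; have [Fu Du] := (QS _ _ _).1 Qu'; have [Fv Dv] := (QS _ _ _).1 Qv'.
have Qu : Q N a u by apply: QNle Qu'.
have Qv : Q N b v by apply: QNle Qv'.
apply/QS; split.
  by move=> n; rewrite /comf; apply: Fcomm.
move=> t; apply: (Qext (fun n => esym (d_comf t u v n))).
have Pa := Du t; have Pb := Dv t.
have Pc : Q N (a + b) (comf u v) by apply: (IHC).
have Pab : Q N (a + b).+1 (comf u (d t v)) by rewrite -addnS; apply: (IHC).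
have PX : Q N (a + b).+1 (conjf (comf u (d t v)) (d t u)) by apply: (IHc) Pab Pa.
apply: (IHM).
  apply: (IHM).
    apply: (IHM); first apply: (IHM) => //.
      apply: (@Qle _ _ ((a + b).+1 + (a + b))); first exact: leq_addr.
      exact: (IHC).
    apply: (IHM).
      apply: (@Qle _ _ ((a + b) + a.+1)); first by rewrite addnS ltnS leq_addr.
      exact: (IHC).
    apply: (@IHc _ a.+1) => //.
    apply: (@Qle _ _ ((a + b) + b.+1)); first by rewrite addnS ltnS leq_addr.
    exact: (IHC).
  apply: (@Qle _ _ (a.+1 + b.+1)); first by rewrite addSn addnS ltnW.
  exact: (IHC).
apply: (@IHc _ b.+1) => //.
apply: (@Qle _ _ (a.+1 + b)); first by rewrite addSn.
exact: (IHC).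
Qed.

Lemma P_mul k u v : P k u -> P k v -> P k (mulf u v).
Proof. move=> /QP Pu /QP Pv; apply/QP => N; case: (Cl_all N) => M _; exact: M. Qed.
Lemma P_comm a b u v : P a u -> P b v -> P (a + b) (comf u v).
Proof. move=> /QP Pu /QP Pv; apply/QP => N; case: (Cl_all N) => _ C; exact: C. Qed.


Lemma P_conj k a u v : P k u -> P a v -> P k (conjf u v).
Proof.
move=> Pu Pv; apply: (@Pext _ (mulf u (comf u v))); first by move=> n; rewrite /mulf /comf /conjf conjC.
apply: P_mul => //; apply: (@Ple _ (k + a)); first exact: leq_addr.
exact: P_comm.
Qed.

Lemma P_prod (X : eqType) (r : seq X) (f : X -> seqT) i :
  (forall x, x \in r -> P i (f x)) -> P i (fun n => \prod_(x <- r) f x n).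
Proof.
elim: r => [|x r IH] Hf.
  by apply: (@Pext _ (fun _ => 1)); [move=> n; rewrite big_nil|exact: P1].
apply: (@Pext _ (mulf (f x) (fun n => \prod_(x <- r) f x n))).
  by move=> n; rewrite big_cons.
apply: P_mul; first by apply: Hf; rewrite mem_head.
by apply: IH => y yr; apply: Hf; rewrite in_cons yr orbT.
Qed.

Definition monoF (c : H) (e : 'rV[int]_l -> int) : seqT := fun n => zexpg c (e n).
Definition me (sg : int) (i : 'I_l -> nat) : 'rV[int]_l -> int := fun n => (sg * mb n i)%R.
Definition deg (i : 'I_l -> nat) : nat := \sum_(t < l) i t.

Lemma deg_dec t i : (0 < i t)%N -> deg i = (deg (dec t i)).+1.
Proof.
move=> it; rewrite /deg (bigD1 t) //= [in RHS](bigD1 t) //= /dec /=.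
rewrite (_ : (t == t) = true); last by apply/eqP.
rewrite -addSn prednK //; congr (_ + _); apply: eq_bigr => j /negbTE jt; by rewrite jt.
Qed.

Lemma d_mono t c sg i n : d t (monoF c (me sg i)) n =
  if (0 < i t)%N then monoF c (me sg (dec t i)) n else 1.
Proof.
rewrite /d /monoF /me zexpgB -GRing.mulrBr mb_step.
by case: ifP => _ //; rewrite GRing.mulr0.
Qed.

Lemma dK_mono K : forall j sg i c n, F (j + deg i) c ->
  F (j + size K) (dK K (monoF c (me sg i)) n).
Proof.
elim: K => [|t K IH] j sg i c n Fc.
  rewrite /= addn0; apply: zexpg_sub => //; apply: (Fle (leq_addr _ _) Fc).
rewrite dK_cons -(@dK_ext K (fun m => if (0 < i t)%N then monoF c (me sg (dec t i)) m else 1)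
  (d t (monoF c (me sg i))) (fun m => esym (d_mono t c sg i m)) n).
case it: (0 < i t)%N.
  rewrite addnS -addSn; apply: IH; rewrite addSn -addnS -deg_dec //.
rewrite dK1; exact: F1.
Qed.

Lemma P_mono sg i c : F (deg i) c -> P 0 (monoF c (me sg i)).
Proof. by move=> Fc K n; apply: dK_mono; rewrite add0n. Qed.

Lemma Taylor_P (D : nat) (c : {ffun 'I_l -> 'I_D.+1} -> H) :
  (forall i, mdeg i <= D -> F (mdeg i) (c i)) ->
  P 0 (fun n => \prod_(i <- midx l D) zexpg (c i) (mbinom n i)).
Proof.
move=> Hc; apply: P_prod => i; rewrite /midx mem_sort mem_filter => /andP [Di _].
apply: (@Pext _ (monoF (c i) (me 1 (fun j => i j)))).
  by move=> n; rewrite /monoF /me GRing.mul1r.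
by apply: P_mono; apply: Hc.
Qed.


Definition ptn (p : 'I_l -> nat) : 'rV[int]_l := \row_j Posz (p j).
Definition incr (t : 'I_l) (p : 'I_l -> nat) : 'I_l -> nat := fun j => (p j + (j == t))%N.

Lemma ptn_incr t p : ptn (incr t p) = (ptn p + evv t)%R.
Proof. by apply/rowP => j; rewrite addev !mxE /incr PoszD; case: (j == t). Qed.

Lemma deg_incr t p : deg (incr t p) = (deg p).+1.
Proof.
rewrite /deg /incr big_split /= -addn1; congr (_ + _).
rewrite (bigD1 t) //= (_ : (t == t) = true); last by apply/eqP.
by rewrite big1 // => j /negbTE ->.
Qed.

Lemma ptn0 : ptn (fun _ => 0%N) = 0%R.
Proof. by apply/rowP => j; rewrite !mxE. Qed.

Lemma deg0 : deg (fun _ => 0%N) = 0%N.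
Proof. by rewrite /deg big1. Qed.

Lemma uniq_P N : forall i u v, s <= i + N -> P i u -> P i v ->
  (forall p, deg p <= N -> u (ptn p) = v (ptn p)) -> forall n, u n = v n.
Proof.
elim: N => [|N IH] i u v sN Pu Pv Ag n.
  by rewrite addn0 in sN; rewrite (Ptriv sN Pu) (Ptriv sN Pv).
case: (leqP s i) => si.
  by rewrite (Ptriv si Pu) (Ptriv si Pv).
have Hd : forall t n, d t u n = d t v n.
  move=> t; apply: (IH i.+1); rewrite ?addSnnS //; try exact: Pd.
  move=> p Dp; rewrite /d -ptn_incr !Ag //; first by rewrite deg_incr.
  exact: leq_trans Dp _.
move: n; apply: walk.
- by rewrite -ptn0 Ag // deg0.
- move=> h t E.
  have := Hd t h; rewrite /d E => /mulgI; done.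
- move=> h t E.
  have := Hd t (h - evv t)%R; rewrite /d GRing.subrK E => /(congr1 (fun x => x^-1)).
  by rewrite !invgM !invgK => /mulgI.
Qed.

Definition ptK (K : seq 'I_l) (x : 'I_l -> nat) : 'I_l -> nat := foldr incr x K.

Lemma deg_ptK K x : deg (ptK K x) = (deg x + size K)%N.
Proof. elim: K => [|t K IH] /=; by rewrite ?addn0 // deg_incr IH addnS. Qed.

Lemma dK_vanish K : forall (r : seqT) x,
  (forall p, deg p < deg x + size K -> r (ptn p) = 1) ->
  dK K r (ptn x) = r (ptn (ptK K x)).
Proof.
elim: K => [//|t K IH] r x Hv.
rewrite dK_cons IH /=.
  rewrite /d ptn_incr Hv ?invg1 ?mul1g //.
  by rewrite deg_ptK /= addnS.
move=> p Dp; rewrite /d -ptn_incr !Hv ?invg1 ?mulg1 //.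
  by rewrite deg_incr /= addnS ltnS.
by rewrite /= addnS ltnS ltnW.
Qed.

Lemma exK (m : 'I_l -> nat) : exists K, size K = deg m /\ forall j, ptK K (fun _ => 0%N) j = m j.
Proof.
suff H0 : forall k m, deg m = k -> exists K, size K = deg m /\ forall j, ptK K (fun _ => 0%N) j = m j.
  exact: H0.
elim=> [|k IH] {}m Dk.
  exists [::]; split => // j /=.
  have : \sum_(t < l) m t == 0%N by rewrite -/(deg m) Dk.
  by rewrite sum_nat_eq0 => /forallP /(_ j) /eqP.
have [t mt] : exists t, (0 < m t)%N.
  apply/existsP; apply: contraT; rewrite negb_exists => /forallP H0.
  have : deg m == 0%N by rewrite /deg sum_nat_eq0; apply/forallP => j; have := H0 j; rewrite lt0n negbK.
  by rewrite Dk.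
have Ddec : deg (dec t m) = k by move: Dk; rewrite (deg_dec mt) => -[].
have [K [sK HK]] := IH (dec t m) Ddec.
exists (t :: K); split; first by rewrite /= sK -deg_dec.
move=> j /=; rewrite /incr HK /dec; case: (eqVneq j t) => [->|jt]; last by rewrite addn0.
by rewrite addn1 prednK.
Qed.


Lemma sorted_split (T : Type) (key : T -> nat) a (r : seq T) :
  sorted (fun x y => key x <= key y) r ->
  r = filter (fun x => key x < a) r ++ filter (fun x => a <= key x) r.
Proof.
elim: r => [//|x r IH] /= Hs.
have Hr := path_sorted Hs.
have Htr : transitive (fun x y : T => key x <= key y) by move=> p q w; apply: leq_trans.
have Hall := order_path_min Htr Hs.
case: (ltnP (key x) a) => xa /=.
  by rewrite -IH.
have E1 : filter (fun y => key y < a) r = [::].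
  have : all (fun y => a <= key y) r by apply: sub_all Hall => y; apply: leq_trans xa.
  by elim: (r) => //= y r' IH' /andP [ay /IH' ->]; rewrite ltnNge ay.
have E2 : filter (fun y => a <= key y) r = r.
  apply/all_filterP; by apply: sub_all Hall => y; apply: leq_trans xa.
by rewrite E1 E2.
Qed.

Lemma prod_pred1 (X : eqType) (r : seq X) (f : X -> H) m :
  m \in r -> uniq r -> \prod_(i <- r | i == m) f i = f m.
Proof.
elim: r => [//|x r IH] mr /andP [xr ur].
rewrite big_cons; case: (eqVneq x m) => [xm|xm].
  subst x; rewrite big1_seq ?mulg1 // => i /andP [/eqP -> mr']; by rewrite mr' in xr.
rewrite IH //; move: mr; rewrite in_cons => /orP [/eqP E|//].
by rewrite E eqxx in xm.
Qed.

Section Taylor.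
Variable D : nat.
Notation I := {ffun 'I_l -> 'I_D.+1}.
Definition pt (i : I) := ptn (fun j => i j).
Definition Tlt (c : I -> H) k n := \prod_(i <- midx l D | mdeg i < k) zexpg (c i) (mbinom n i).

Lemma midx_sorted : sorted (fun a b => mdeg a <= mdeg b) (midx l D).
Proof. apply: sort_sorted => a b; exact: leq_total. Qed.
Lemma midx_uniq : uniq (midx l D).
Proof. by rewrite /midx sort_uniq filter_uniq // enum_uniq. Qed.
Lemma mem_midx i : (i \in midx l D) = (mdeg i <= D).
Proof. by rewrite /midx mem_sort mem_filter mem_enum andbT. Qed.

Lemma mbinom_pt_zero (i m : I) : (exists j, m j < i j) -> mbinom (pt m) i = 0%R.
Proof.
move=> [j ij]; rewrite /mbinom (bigD1 j) //= /pt /ptn mxE binz_big // GRing.mul0r //.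
Qed.

Lemma mbinom_pt_same (m : I) : mbinom (pt m) m = 1%R.
Proof. by rewrite /mbinom big1 // => j _; rewrite /pt /ptn mxE binz_same. Qed.

Lemma le_same (i m : I) : (forall j, i j <= m j) -> mdeg i = mdeg m -> i = m.
Proof.
move=> le Eq; apply/ffunP => j; apply: val_inj => /=.
have : \sum_(t < l) (m t - i t)%N == 0%N.
  by rewrite sumnB // -/(mdeg m) -/(mdeg i) Eq subnn.
rewrite sum_nat_eq0 => /forallP /(_ j) /=; rewrite subn_eq0 => mi.
by apply/eqP; rewrite eqn_leq le mi.
Qed.

Lemma Tlt_eval (c : I -> H) k (m : I) : mdeg m <= D -> mdeg m < k ->
  Tlt c k (pt m) = Tlt c (mdeg m) (pt m) * c m.
Proof.
move=> mD mk; set a := mdeg m; set f := fun i => zexpg (c i) (mbinom (pt m) i).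
have S1 : Tlt c k (pt m) = \prod_(i <- midx l D | (mdeg i < a) || (i == m)) f i.
  rewrite /Tlt big_mkcond [RHS]big_mkcond; apply: eq_bigr => i _.
  case: (ltnP (mdeg i) a) => ia /=.
    by rewrite (leq_trans ia (ltnW mk)).
  case: (eqVneq i m) => [->|im]; first by rewrite mk.
  case: ifP => // _; rewrite /f mbinom_pt_zero //.
  apply/existsP; apply: contraT; rewrite negb_exists => /forallP H0.
  have le : forall j, i j <= m j by move=> j; have := H0 j; rewrite -leqNgt.
  have : mdeg i <= mdeg m by apply: leq_sum => j _; apply: le.
  rewrite -/a => ia'; have E : mdeg i = mdeg m by apply/eqP; rewrite eqn_leq ia' ia.
  by rewrite (le_same le E) eqxx in im.
rewrite S1 (sorted_split a midx_sorted) big_cat /= !big_filter_cond.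
congr (_ * _).
  rewrite /Tlt; apply: eq_bigl => i; by case: (mdeg i < a).
rewrite (eq_bigl (fun i => i == m)); last first.
  move=> i; case: (eqVneq i m) => [->|]; first by rewrite leqnn orbT.
  by rewrite orbF andbC => /negbTE _; case: ltnP.
by rewrite prod_pred1 ?midx_uniq ?mem_midx // /f mbinom_pt_same.
Qed.


Variable u : seqT.
Hypothesis Pu : P 0 u.
Hypothesis sD : s <= D.

Fixpoint cstep (k : nat) : I -> H :=
  match k with
  | 0 => fun _ => 1
  | k'.+1 => fun i => if mdeg i == k' then (Tlt (cstep k') k' (pt i))^-1 * u (pt i)
                      else cstep k' i
  end.

Lemma cstep_stable k i : mdeg i < k -> cstep k i = cstep (mdeg i).+1 i.
Proof.
elim: k => // k IH; rewrite ltnS leq_eqVlt => /orP [/eqP E|lt].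
  by rewrite E.
by rewrite /= (ltn_eqF lt) IH.
Qed.

Lemma Tlt_dep k j n : j <= k -> Tlt (cstep k) j n = Tlt (cstep j) j n.
Proof.
move=> jk; rewrite /Tlt; apply: eq_bigr => i ij.
by rewrite (@cstep_stable k) ?(leq_trans ij jk) // (@cstep_stable j i ij).
Qed.

Definition cfin := cstep D.+1.

Lemma cfin_eq m : mdeg m <= D -> cfin m = (Tlt cfin (mdeg m) (pt m))^-1 * u (pt m).
Proof.
move=> mD; rewrite /cfin cstep_stable ?ltnS //= eqxx.
by rewrite (@Tlt_dep D.+1) // ltnW.
Qed.

Lemma u_pt m k : mdeg m <= D -> mdeg m < k -> u (pt m) = Tlt cfin k (pt m).
Proof. by move=> mD mk; rewrite Tlt_eval // (cfin_eq mD) mulVKg. Qed.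

Lemma ptn_ffun p : deg p <= D -> exists i : I, pt i = ptn p /\ mdeg i = deg p.
Proof.
move=> pD.
have pj : forall j, p j < D.+1.
  move=> j; rewrite ltnS; apply: leq_trans pD; rewrite /deg (bigD1 j) //=; exact: leq_addr.
exists [ffun j => inord (p j)]; split.
  by apply/rowP => j; rewrite !mxE ffunE inordK.
by rewrite /mdeg /deg; apply: eq_bigr => j _; rewrite ffunE inordK.
Qed.

Lemma cfin_F m : mdeg m <= D -> F (mdeg m) (cfin m).
Proof.
suff H0 : forall k m, mdeg m <= D -> mdeg m < k -> F (mdeg m) (cfin m).
  by move=> mD; apply: (H0 (mdeg m).+1).
clear m; elim=> // k IH m mD; rewrite ltnS leq_eqVlt => /orP [/eqP Ek|lt]; last exact: IH.
set a := mdeg m.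
pose R := fun n => \prod_(i <- rev (filter (fun i => mdeg i < a) (midx l D)))
   monoF (cfin i) (me (-1) (fun j => i j)) n.
have PR : P 0 R.
  apply: P_prod => i; rewrite mem_rev mem_filter mem_midx => /andP [ia iD].
  by apply: P_mono; apply: IH => //; rewrite -Ek.
have ER : forall n, R n = (Tlt cfin a n)^-1.
  move=> n; rewrite /R /Tlt -[in RHS]big_filter -[in RHS](revK (filter _ _)) -prodgV.
  apply: eq_bigr => i _; rewrite /monoF /me GRing.mulN1r zexpgN //.
have Pr : P 0 (mulf R u) by apply: P_mul.
have [K [sK HK]] := exK (fun j => m j).
have Hv : forall p, deg p < deg (fun _ => 0%N) + size K -> mulf R u (ptn p) = 1.
  move=> p; rewrite deg0 add0n sK => pa.
  have [i [Ei Di]] := ptn_ffun (ltnW (leq_trans pa mD)).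
  rewrite -Ei /mulf ER (@u_pt i a) ?mulVg //; first by rewrite Di ltnW // (leq_trans pa mD).
  by rewrite Di.
have := Pr K (ptn (fun _ => 0%N)); rewrite dK_vanish // add0n sK.
have -> : ptn (ptK K (fun _ => 0%N)) = pt m by apply/rowP => j; rewrite !mxE HK.
by rewrite /mulf ER -cfin_eq.
Qed.

Lemma Tlt_full n : Tlt cfin D.+1 n = \prod_(i <- midx l D) zexpg (cfin i) (mbinom n i).
Proof.
rewrite /Tlt -big_filter; congr (\prod_(i <- _) _).
by apply/all_filterP/allP => i; rewrite mem_midx.
Qed.

Lemma Taylor_exists : is_poly F u.
Proof.
exists D, cfin; split; first by move=> i; apply: cfin_F.
have PT := Taylor_P cfin_F.
apply: (uniq_P (i := 0) (N := D)) => //.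
move=> p pD; have [i [Ei Di]] := ptn_ffun pD.
by rewrite -Ei (@u_pt i D.+1) ?Tlt_full // Di.
Qed.

End Taylor.

End Generic.

End MC.
Import MC.

Module MFin.
Set Implicit Arguments. Unset Strict Implicit. Unset Printing Implicit Defensive.
Local Open Scope group_scope.

Ltac gsimp := rewrite /commg /conjg;
  repeat rewrite ?invgM ?invgK ?mulgA ?mulgK ?mulgVK ?mulg1 ?mul1g ?invg1 ?mulgV ?mulVg.

Section Ids.
Variable G : groupType.
Implicit Types x y : G.
Lemma id_sqcomm (x y nu mu : G) :
  [~ nu * x, mu * y] * [~ x, y]^-1 = ([~ nu, mu * y] ^ x) * (([~ x, mu] ^ y) ^ ([~ x, y]^-1)).
Proof. by gsimp. Qed.
Lemma id_fibM (p1 p2 q1 q2 : G) :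
  (p2 * q2) * (p1 * q1)^-1 = (q2 * q1^-1) ^ (p2^-1) * (p2 * p1^-1).
Proof. by gsimp. Qed.
Lemma id_fibV (p1 p2 : G) : p2^-1 * (p1^-1)^-1 = ((p2 * p1^-1)^-1) ^ p2.
Proof. by gsimp. Qed.
Lemma id_shift (X dl y : G) :
  X * ((X * dl) ^ y)^-1 = (dl^-1 ^ y) ^ (X^-1) * [~ X^-1, y].
Proof. by gsimp. Qed.
Lemma id_lin0 (gn ia fa e : G) :
  gn * ia * (gn * (fa * ia) * e)^-1 * fa = (e^-1 ^ (gn * ia)^-1) * [~ gn^-1, fa].
Proof. by gsimp. Qed.
Lemma id_linS (gn gl ge e1 e2 e3 : G) :
  (gn * (gl * ge * e3))^-1 * (gn * gl * e1 * ge * e2) = e3^-1 * (e1 ^ ge) * e2.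
Proof. by gsimp. Qed.
Lemma id_linP (gn gl ge e1 e2 e3 : G) :
  (gn * (gl * e3^-1 * ge^-1))^-1 * (gn * gl * e1 * e2^-1 * ge^-1) = (e3 * e1 * e2^-1) ^ (ge^-1).
Proof. by gsimp. Qed.
End Ids.

Section App.
Variable G : groupType.
Variable Gf : nat -> G -> Prop.
Hypothesis Gsub : forall i, is_subgroup (Gf i).
Hypothesis Gall0 : forall x, Gf 0 x.
Hypothesis Gall1 : forall x, Gf 1 x.
Hypothesis Gnest : forall i x, Gf i.+1 x -> Gf i x.
Hypothesis Gcomm : forall i j x y, Gf i x -> Gf j y -> Gf (i + j) [~ x, y].
Variable s : nat.
Hypothesis Gtriv : forall i x, s <= i -> Gf i x -> x = 1.

Let GM := FM Gsub.
Let GV := FV Gsub.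
Let G1 := F1 Gsub.
Let GJ := FJ Gsub Gcomm.
Notation sq := (sq_filt Gf).

Lemma sq_char i (p : prodG G) : sq i p <->
  Gf (maxn i 1%N) p.1 /\ Gf (maxn i 1%N) p.2 /\ Gf (maxn i 1%N).+1 (p.2 * p.1^-1).
Proof.
rewrite /sq_filt /fibprod; case: ifP => i1.
  have -> : maxn i 1%N = 1%N by apply/maxn_idPr.
  by split=> [[_ [_ H]]|[_ [_ H]]].
have -> : maxn i 1%N = i by apply/maxn_idPl; apply: ltnW; rewrite ltnNge i1.
by [].
Qed.

Lemma sq_sub i : is_subgroup (sq i).
Proof.
split; first by apply/sq_char; rewrite /= invg1 mulg1; split; [|split]; apply: G1.
split.
  move=> p q /sq_char [P1 [P2 P3]] /sq_char [Q1 [Q2 Q3]]; apply/sq_char; rewrite /=.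
  split; first exact: GM. split; first exact: GM.
  rewrite id_fibM; apply: GM => //; apply: GJ => //.
move=> p /sq_char [P1 [P2 P3]]; apply/sq_char; rewrite /=.
split; first exact: GV. split; first exact: GV.
rewrite id_fibV; apply: GJ => //; exact: GV.
Qed.

Lemma sq_nest i p : sq i.+1 p -> sq i p.
Proof.
move=> /sq_char [P1 [P2 P3]]; apply/sq_char.
have le : maxn i 1%N <= maxn i.+1 1%N by rewrite geq_max leq_maxr (leq_trans (leqnSn i)) ?leq_maxl.
split; first exact: (Fle Gnest le).
split; first exact: (Fle Gnest le).
by apply: (Fle Gnest _ P3); rewrite ltnS.
Qed.

Lemma sq_comm i j p q : sq i p -> sq j q -> sq (i + j) [~ p, q].
Proof.
move=> /sq_char [P1 [P2 P3]] /sq_char [Q1 [Q2 Q3]]; apply/sq_char; rewrite /=.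
set A := maxn i 1%N in P1 P2 P3; set B := maxn j 1%N in Q1 Q2 Q3.
have le : maxn (i + j) 1%N <= A + B by rewrite geq_max leq_add ?leq_maxl // (leq_trans (leq_maxr i 1%N)) // leq_addr.
split; first by apply: (Fle Gnest le); apply: Gcomm.
split; first by apply: (Fle Gnest le); apply: Gcomm.
have -> : p.2 = (p.2 * p.1^-1) * p.1 by rewrite mulgVK.
have -> : q.2 = (q.2 * q.1^-1) * q.1 by rewrite mulgVK.
rewrite id_sqcomm; apply: (Fle Gnest (_ : _ <= (A + B).+1)); first by rewrite ltnS.
apply: GM.
  apply: GJ => //; rewrite -addSn; apply: Gcomm => //.
  apply: GM => //; exact: Gnest.
apply: GJ => //; apply: GJ => //; rewrite -addnS; apply: Gcomm => //.
Qed.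

Lemma sq_triv i p : maxn s 1%N <= i -> sq i p -> p = 1.
Proof.
move=> si /sq_char [P1 [P2 _]].
have Ei : maxn i 1%N = i by apply/maxn_idPl; apply: leq_trans si; rewrite leq_maxr.
rewrite Ei in P1 P2; have si' : s <= i by apply: leq_trans si; rewrite leq_maxl.
case: p P1 P2 => a b /= Ha Hb.
by rewrite (Gtriv si' Ha) (Gtriv si' Hb).
Qed.


Variable l : nat.

Lemma delta_walk (D : seqT G l) j : (forall t m, Gf j.+1 (d t D m)) ->
  forall h' n, Gf j.+1 ((D n)^-1 * D (n + h')%R).
Proof.
move=> Hd; apply: walk.
- by move=> n; rewrite GRing.addr0 mulVg; apply: G1.
- move=> h' t IH n.
  have -> : (D n)^-1 * D (n + (h' + evv t))%R = ((D n)^-1 * D (n + h')%R) * d t D (n + h')%R.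
    by rewrite /d GRing.addrA !mulgA mulgK.
  by apply: GM.
- move=> h' t IH n.
  have -> : (D n)^-1 * D (n + (h' - evv t))%R = ((D n)^-1 * D (n + h')%R) * (d t D (n + (h' - evv t))%R)^-1.
    rewrite /d invgM invgK GRing.addrA GRing.subrK mulgA mulgK.
    by rewrite -GRing.addrA.
  by apply: GM => //; apply: GV.
Qed.

Lemma dK_fst (K : seq 'I_l) (w : seqT (prodG G) l) n : (dK K w n).1 = dK K (fun m => (w m).1) n.
Proof.
elim: K w => [//|t K IH] w; rewrite !dK_cons IH; apply: dK_ext => m; by [].
Qed.
Lemma dK_snd (K : seq 'I_l) (w : seqT (prodG G) l) n : (dK K w n).2 = dK K (fun m => (w m).2) n.
Proof.
elim: K w => [//|t K IH] w; rewrite !dK_cons IH; apply: dK_ext => m; by [].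
Qed.

Lemma dK_shift (K : seq 'I_l) (v : seqT G l) (h : 'rV[int]_l) n :
  dK K (fun m => v (m + h)%R) n = dK K v (n + h)%R.
Proof.
elim: K v n => [//|t K IH] v n; rewrite !dK_cons -IH; apply: dK_ext => m.
by rewrite /d GRing.addrAC.
Qed.

Lemma dK_conjc (K : seq 'I_l) (v : seqT G l) (y : G) n :
  dK K (fun m => v m ^ y) n = (dK K v n) ^ y.
Proof.
elim: K v n => [//|t K IH] v n; rewrite !dK_cons -IH; apply: dK_ext => m.
by rewrite /d; gsimp.
Qed.

Lemma dK_conj (K : seq 'I_l) (v : seqT G l) (x y : G) n : K != [::] ->
  dK K (fun m => x * v m * y) n = (dK K v n) ^ y.
Proof.
case: K => [//|t K] _; rewrite !dK_cons -dK_conjc; apply: dK_ext => m.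
by rewrite /d; gsimp.
Qed.


Lemma prod_sub1 (r : seq 'I_l) (f f' : 'I_l -> G) t c :
  (forall j, j != t -> f' j = f j) -> f' t = f t * c -> uniq r ->
  (t \in r -> Gf 2 ((\prod_(j <- r) f j * c)^-1 * \prod_(j <- r) f' j)) /\
  (t \notin r -> \prod_(j <- r) f' j = \prod_(j <- r) f j).
Proof.
move=> Hf Ht; elim: r => [|x r IH] /=; first by move=> _; split; [rewrite in_nil|rewrite !big_nil].
move=> /andP [xr ur]; have [IH1 IH2] := IH ur.
rewrite !big_cons; case: (eqVneq x t) => [xt|xt].
  subst x; split; last by rewrite mem_head.
  move=> _; rewrite Ht (IH2 xr).
  have -> : (f t * \prod_(j <- r) f j * c)^-1 * (f t * c * \prod_(j <- r) f j) =
     [~ c, \prod_(j <- r) f j] by gsimp.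
  by apply: (Gcomm (i:=1%N) (j:=1%N)); apply: Gall1.
rewrite Hf //; split.
  rewrite in_cons eq_sym (negbTE xt) /= => tr.
  have -> : (f x * \prod_(j <- r) f j * c)^-1 * (f x * \prod_(j <- r) f' j) =
    (\prod_(j <- r) f j * c)^-1 * \prod_(j <- r) f' j by gsimp.
  exact: IH1.
by rewrite in_cons eq_sym (negbTE xt) /= => tr; rewrite IH2.
Qed.

Variable g : 'rV[int]_l -> G.
Hypothesis Pg : P Gf 0 g.
Hypothesis g0 : g 0%R = 1.

Lemma C_unit m t : Gf 2 ((g m * g (evv t))^-1 * g (m + evv t)%R).
Proof.
have Hd : forall t' m', Gf 1%N.+1 (d t' (d t g) m').
  move=> t' m'; exact: (Pg [:: t; t'] m').
have := delta_walk Hd m 0%R.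
rewrite /d !GRing.add0r g0; gsimp; by apply.
Qed.

Lemma lin_add h' t : Gf 2 ((g_lin g h' * g (evv t))^-1 * g_lin g (h' + evv t)%R).
Proof.
case: (@prod_sub1 (index_enum 'I_l) (fun j => zexpg (g (unitv j)) (h' ord0 j))
  (fun j => zexpg (g (unitv j)) ((h' + evv t)%R ord0 j)) t (g (evv t))).
- by move=> j /negbTE jt; rewrite addev jt GRing.addr0.
- by rewrite addev (_ : (t == t) = true) ?zexpgS //; apply/eqP.
- exact: index_enum_uniq.
- move=> H1 _; apply: H1; exact: mem_index_enum.
Qed.

Lemma C_all h' : forall n, Gf 2 ((g n * g_lin g h')^-1 * g (n + h')%R).
Proof.
move: h'; apply: walk.
- move=> n; have -> : g_lin g 0%R = 1.
    by rewrite /g_lin big1 // => j _; rewrite mxE.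
  by rewrite mulg1 GRing.addr0 mulVg; apply: G1.
- move=> h' t IH n.
  set gn := g n; set gl := g_lin g h'; set ge := g (evv t).
  set e1 := (gn * gl)^-1 * g (n + h')%R.
  set e2 := (g (n + h')%R * ge)^-1 * g ((n + h') + evv t)%R.
  set e3 := (gl * ge)^-1 * g_lin g (h' + evv t)%R.
  have E1 : g (n + h')%R = gn * gl * e1 by rewrite /e1 mulVKg.
  have E2 : g (n + (h' + evv t))%R = g (n + h')%R * ge * e2 by rewrite /e2 mulVKg GRing.addrA.
  have E3 : g_lin g (h' + evv t)%R = gl * ge * e3 by rewrite /e3 mulVKg.
  have F1' : Gf 2 e1 by apply: IH.
  have F2 : Gf 2 e2 by apply: C_unit.
  have F3 : Gf 2 e3 by apply: lin_add.
  rewrite E2 E3 E1 id_linS; apply: GM; last exact: F2.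
  apply: GM; first exact: GV.
  exact: GJ.
- move=> h' t IH n.
  set gn := g n; set gl := g_lin g h'; set ge := g (evv t).
  set e1 := (gn * gl)^-1 * g (n + h')%R.
  set e2 := (g (n + (h' - evv t))%R * ge)^-1 * g (n + (h' - evv t) + evv t)%R.
  set e3 := (g_lin g (h' - evv t)%R * ge)^-1 * g_lin g (h' - evv t + evv t)%R.
  have F1' : Gf 2 e1 by apply: IH.
  have F2 : Gf 2 e2 by apply: C_unit.
  have F3 : Gf 2 e3 by apply: lin_add.
  have E1 : g (n + h')%R = gn * gl * e1 by rewrite /e1 mulVKg.
  have E2' : g (n + h')%R = g (n + (h' - evv t))%R * ge * e2.
    by rewrite /e2 mulVKg -GRing.addrA GRing.subrK.
  have E3' : gl = g_lin g (h' - evv t)%R * ge * e3 by rewrite /e3 mulVKg GRing.subrK.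
  have E2 : g (n + (h' - evv t))%R = gn * gl * e1 * e2^-1 * ge^-1.
    by rewrite -E1 E2' mulgK mulgK.
  have E3 : g_lin g (h' - evv t)%R = gl * e3^-1 * ge^-1.
    by rewrite [in RHS]E3' mulgK mulgK.
  rewrite E2 E3 id_linP; apply: GJ; last exact: Gall0.
  apply: GM; last exact: GV.
  exact: GM.
Qed.

Variables (frac intp : G -> G).
Hypothesis fi : forall x, x = frac x * intp x.
Variable h : 'rV[int]_l.

Lemma pair_poly : P (sq_filt Gf) 0 (g_shift frac intp g h).
Proof.
set a := g_lin g h.
set w := fun n => ((frac a)^-1 * g (n + h)%R * (intp a)^-1, g n) : prodG G.
apply: (@Pext _ _ _ _ w).
  move=> n; rewrite /w /g_shift /g_2 -/a; congr (_, _); by rewrite !mulgA mulgVK.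
move=> K n; apply/sq_char; rewrite dK_fst dK_snd /w /= add0n.
case: K => [|t K'].
  rewrite /=; split; first exact: Gall1. split; first exact: Gall1.
  set e := (g n * a)^-1 * g (n + h)%R.
  have Fe : Gf 2 e by apply: C_all.
  have Eg : g (n + h)%R = g n * (frac a * intp a) * e by rewrite /e -fi mulVKg.
  have -> : g n * ((frac a)^-1 * g (n + h)%R * (intp a)^-1)^-1 =
     g n * intp a * (g (n + h)%R)^-1 * frac a by gsimp.
  rewrite Eg id_lin0; apply: GM; first by apply: GJ; apply: GV.
  by apply: (Gcomm (i:=1%N) (j:=1%N)); apply: Gall1.
set K := t :: K'.
have EK : maxn (size K) 1%N = size K by apply/maxn_idPl.
rewrite EK.
rewrite (@dK_conj K (fun m => g (m + h)%R) _ _ n) // dK_shift.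
set Dg := dK K g.
have HD : forall m, Gf (size K) (Dg m) by move=> m; have := Pg K m; rewrite add0n.
split; first by apply: GJ.
split; first exact: HD.
have Hd : forall t' m, Gf (size K).+1 (d t' Dg m).
  move=> t' m; have := Pg (rcons K t') m; rewrite add0n size_rcons -cats1 dK_cat.
  by [].
have Fdl := delta_walk Hd h n.
set dl := (Dg n)^-1 * Dg (n + h)%R in Fdl.
have -> : Dg (n + h)%R = Dg n * dl by rewrite /dl mulVKg.
rewrite id_shift; apply: GM.
  apply: GJ; last exact: Gall0.
  apply: GJ; last exact: Gall0.
  exact: GV.
rewrite -addn1; apply: Gcomm; [exact: GV|exact: Gall1].
Qed.

Lemma main_poly : is_poly (sq_filt Gf) (g_shift frac intp g h).
Proof.
apply: (@Taylor_exists _ _ sq_sub sq_nest sq_comm (maxn s 1%N) sq_triv l (maxn s 1%N)) => //.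
exact: pair_poly.
Qed.

End App.



End MFin.
Import MFin.

Theorem lemmal (G : groupType) (Gamma : G -> Prop) (frac intp : G -> G)
    (Gf : nat -> G -> Prop) (l : nat) (g : 'rV[int]_l -> G) (h : 'rV[int]_l) :
  is_subgroup Gamma ->
  (forall x, x = (frac x * intp x)%g /\ Gamma (intp x)) ->
  is_filtration Gf ->
  is_poly Gf g ->
  g 0%R = 1%g ->
  is_poly (sq_filt Gf) (g_shift frac intp g h).
Proof.
move=> _ Hfi [Gsub [Gall0 [Gall1 [Gnest [Gcomm [s Gtriv]]]]]] [D [c [Hc Hg]]] g0.
have fi : forall x, x = (frac x * intp x)%g by move=> x; case: (Hfi x).
have Pg : P Gf 0 g.
  apply: (Pext (fun n => esym (Hg n))).
  exact: (Taylor_P Gsub Gnest Gcomm Hc).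
exact: (main_poly Gsub Gall0 Gall1 Gnest Gcomm Gtriv Pg g0 fi h).
Qed.
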